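(* Let $0<\epsilon\le1$ and suppose $L^*\ge\frac{1}{\epsilon^3}\log T$. Let $\sigma_{temp}$ be the random tentative schedule defined below. Then for any interval $I=[t_1,t_2]\subseteq[1,T]$, $\Pr[OF(I)\ge 6\epsilon L^*]\le 1/T^3$.
   Context: Broadcast scheduling with maximum flow time: a set $\mathcal{P}$ of unit-sized pages, requests $\rho$ with integer release time $r_\rho\ge0$ and page $p_\rho$; $L^*$ is the optimal maximum flow time; $T=\max_\rho r_\rho+n$ is the time horizon ($n=|\mathcal{P}|$); $\log$ is natural. Assume any two requests for the same page with no request for that page released strictly between them have release times differing by at most $L^*-1$. For page $p$ let $\mathcal{T}_p$ be the set of release times of requests for $p$ and $W_p=[\min\mathcal{T}_p+1,\max\mathcal{T}_p+L^*]$. Let $x^*=(x^*_{p,t})_{p\in\mathcal{P},t\in[T]}$ be a feasible solution of the linear program: $\sum_{t'=t+1}^{t+L^*}x_{p,t'}\ge1$ for all $p$ and $t\in\mathcal{T}_p$; $\sum_{p}x_{p,t}\le1$ for all $t\in[T]$; $x_{p,t}=0$ for $t\notin W_p$; $x_{p,t}\ge0$. Let $\mathcal{G}$ be a partition of $\mathcal{P}$ into at most $2L^*$ groups such that distinct pages in the same group have disjoint windows $W_p$. For each group $g$ let $y^*_{g,t}=\sum_{p\in g}\sum_{t'\le t}x^*_{p,t'}$, and choose $\alpha_g$ uniformly at random from $[0,1]$, independently over groups. The tentative schedule $\sigma_{temp}$ (which may transmit several pages at one time) does the following for each group $g$: at every time $t$ such that $y^*_{g,t-1}<k+\alpha_g\le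 y^*_{g,t}$ for some integer $k$, it transmits the (unique) page $p\in g$ with $x^*_{p,t}>0$. Let $Q_{temp}(I)$ be the number of transmissions made by $\sigma_{temp}$ during $I$, and $OF([t_1,t_2]):=\max\{Q_{temp}([t_1,t_2])-(t_2-t_1+1),0\}$. *)

(* Defs.v *)
From HB Require Import structures.
From mathcomp Require Import all_boot all_order all_algebra.
From mathcomp Require Import all_classical all_reals all_analysis.
Set Implicit Arguments. Unset Strict Implicit. Unset Printing Implicit Defensive.
Import Order.TTheory GRing.Theory Num.Theory.
Local Open Scope classical_set_scope.
Local Open Scope ring_scope.

(* requests are a finite list of pairs (release time r_rho, page p_rho)*)
Section Broadcast.
Variable Pg : finType.
Implicit Types (reqs : seq (nat * Pg)) (p q : Pg) (L t : nat).

Definition horizon reqs : nat := ((\max_(rho <- reqs) rho.1) + #|Pg|)%N.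

Definition max_flow_le (sigma : nat -> option Pg) reqs L : Prop :=
  forall rho, rho \in reqs ->
    exists t, (rho.1 < t <= rho.1 + L)%N /\ sigma t = Some rho.2.

Definition max_flow_feasible reqs L : Prop :=
  exists sigma : nat -> option Pg, max_flow_le sigma reqs L.

Definition is_opt_max_flow reqs L : Prop :=
  max_flow_feasible reqs L /\ forall L', max_flow_feasible reqs L' -> (L <= L')%N.

Definition consecutive_gap_le reqs L : Prop :=
  forall r1 r2 p, (r1, p) \in reqs -> (r2, p) \in reqs -> (r1 <= r2)%N ->
    (forall r, (r, p) \in reqs -> ~~ (r1 < r < r2)%N) ->
    (r2 - r1 <= L - 1)%N.

(* t \in W_p = [min T_p + 1, max T_p + L]  (empty if T_p is empty) *)
Definition in_window reqs L p t : bool :=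
  has (fun rho => (rho.2 == p) && (rho.1 < t)%N) reqs &&
  has (fun rho => (rho.2 == p) && (t <= rho.1 + L)%N) reqs.

Variable R : realType.

Definition lp_feasible reqs L (x : Pg -> nat -> R) : Prop :=
  [/\ (forall p t, (t == 0)%N || (horizon reqs < t)%N -> x p t = 0),
      (forall rho, rho \in reqs ->
         1 <= \sum_(rho.1.+1 <= t' < (rho.1 + L).+1) x rho.2 t'),
      (forall t, (1 <= t <= horizon reqs)%N -> \sum_(p : Pg) x p t <= 1),
      (forall p t, ~~ in_window reqs L p t -> x p t = 0) &
      (forall p t, 0 <= x p t)].

Definition ycum (m : nat) (grp : Pg -> 'I_m) (x : Pg -> nat -> R)
    (g : 'I_m) (t : nat) : R :=
  \sum_(p : Pg | grp p == g) \sum_(0 <= t' < t.+1) x p t'.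

Definition transmits (m : nat) (grp : Pg -> 'I_m) (x : Pg -> nat -> R)
    (a : R) (g : 'I_m) (t : nat) : bool :=
  `[< exists k : int, ycum grp x g t.-1 < k%:~R + a <= ycum grp x g t >].

Definition Qtemp (m : nat) (grp : Pg -> 'I_m) (x : Pg -> nat -> R)
    (alpha : 'I_m -> R) (t1 t2 : nat) : nat :=
  \sum_(t1 <= t < t2.+1) #|[set g : 'I_m | transmits grp x (alpha g) g t]|.

(* OF([t1,t2]) = max(Q_temp([t1,t2]) - (t2 - t1 + 1), 0)  (truncated nat subtraction) *)
Definition OF (m : nat) (grp : Pg -> 'I_m) (x : Pg -> nat -> R)
    (alpha : 'I_m -> R) (t1 t2 : nat) : nat :=
  (Qtemp grp x alpha t1 t2 - (t2 - t1 + 1))%N.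

End Broadcast.

Section Randomness.
Context {R : realType} {d : measure_display} {Omega : measurableType d}.
Variable (Pr : probability Omega R).

Definition uniform01_rv (X : Omega -> R) : Prop :=
  measurable_fun setT X /\
  forall B : set R, measurable B ->
    Pr (X @^-1` B) = (@lebesgue_measure R) (B `&` `[0%R, 1%R]).

Definition mutually_independent (I : finType) (X : I -> Omega -> R) : Prop :=
  forall (J : {set I}) (B : I -> set R), (forall i, measurable (B i)) ->
    Pr (\bigcap_(i in [set i | i \in J]) (X i @^-1` B i)) =
    (\prod_(i in J) Pr (X i @^-1` B i))%E.

End Randomness.

(* Main.v *)
Require Import Defs.
From HB Require Import structures.
From mathcomp Require Import all_boot all_order all_algebra.
From mathcomp Require Import all_classical all_reals all_analysis.
From mathcomp Require Import zify ring lra.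
Import Order.TTheory GRing.Theory Num.Theory.
Local Open Scope classical_set_scope.
Local Open Scope ring_scope.

Definition pb {R : realType} {m : nat} (q : 'I_m -> R) (b : {ffun 'I_m -> bool}) (i : 'I_m) : R :=
  if b i then q i else 1 - q i.

Section PartA.
Context {R : realType}.

Lemma step_floor (u v a : R) : u <= v ->
  ((`[< exists z : int, u < z%:~R + a <= v >] : nat)%:R : R)
   <= (Num.floor (v - a) - Num.floor (u - a))%:~R.
Proof.
move=> uv.
have mono : Num.floor (u - a) <= Num.floor (v - a) by apply: le_floor; rewrite lerD2r.
case: asboolP => [[z /andP[h1 h2]]|_] /=.
- have H1 : z <= Num.floor (v - a) by rewrite floor_ge_int lerBrDr.
  have H2 : Num.floor (u - a) < z by rewrite floor_lt_int ltrBlDr.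
  have : 1 <= Num.floor (v - a) - Num.floor (u - a).
    by move: H1 H2; lia.
  by move=> h; rewrite /= ler1z.
- by rewrite /= ler0z subr_ge0.
Qed.

Lemma tele_floor (y : nat -> R) (a : R) (k n : nat) :
  (forall t, y t <= y t.+1) ->
  ((\sum_(k.+1 <= t < k.+1 + n)
      (`[< exists z : int, (y t.-1 < z%:~R + a <= y t)%R >] : nat))%:R : R)
   <= (Num.floor (y (k + n)%N - a) - Num.floor (y k - a))%:~R.
Proof.
move=> ym; elim: n => [|n IH].
  by rewrite !addn0 big_geq // subrr.
rewrite addnS big_nat_recr /=; last by rewrite leq_addr.
rewrite natrD.
have -> : (Num.floor (y (k + n.+1)%N - a) - Num.floor (y k - a)) =
  (Num.floor (y (k + n)%N - a) - Num.floor (y k - a)) +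
  (Num.floor (y (k + n.+1)%N - a) - Num.floor (y (k+n)%N - a)) by ring.
rewrite intrD lerD // addnS addSn.
by apply: step_floor.
Qed.

End PartA.

Section PartA2.
Context {R : realType}.
Definition frac (x : R) : R := x - (Num.floor x)%:~R.
Definition Sg (A B : R) : set R :=
  if frac A <= frac B then [set a | frac A < a <= frac B]
  else [set a | ~~ (frac B < a <= frac A)].
Definition dgi (A B : R) : int :=
  Num.floor B - Num.floor A - (if frac A <= frac B then 0 else 1).
Definition qg (A B : R) : R :=
  if frac A <= frac B then frac B - frac A else 1 - (frac A - frac B).

Lemma frac_ge0 x : 0 <= frac x.
Proof. by rewrite /frac subr_ge0 floor_le. Qed.
Lemma frac_lt1 x : frac x < 1.
Proof.
rewrite /frac ltrBlDr addrC.
have := floor_lt_int x (Num.floor x + 1).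
by rewrite ltrDl ltr01 intrD => /esym.
Qed.

Lemma dq (A B : R) : (dgi A B)%:~R + qg A B = B - A.
Proof.
rewrite /dgi /qg /frac; case: ifP => _; rewrite !intrD !intrN /=; ring.
Qed.

Lemma grp_X (A B a : R) : 0 <= a <= 1 ->
  Num.floor (B - a) - Num.floor (A - a) <= dgi A B + ((a \in Sg A B) : nat)%:Z.
Proof.
move=> /andP[a0 a1].
have h1 : Num.floor (B - a) <= Num.floor B.
  by apply: le_floor; rewrite lerBlDr lerDl.
have h2 : frac B < a -> Num.floor (B - a) < Num.floor B.
  by move=> h; rewrite floor_lt_int ltrBlDr addrC -ltrBlDr.
have h3 : Num.floor A - 1 <= Num.floor (A - a).
  by rewrite floor_ge_int intrB lerB // floor_le.
have h4 : a <= frac A -> Num.floor A <= Num.floor (A - a).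
  by move=> h; rewrite floor_ge_int lerBrDr addrC -lerBrDr.
rewrite /dgi /Sg; case: ifP => hAB;
  case: (boolP (a \in _)) => hz; move: (hz); rewrite ?notin_setE ?inE /= => hz'.
- lia.
- case: (leP a (frac A)) => ha.
  + have := h4 ha. lia.
  + have hb : frac B < a.
      by rewrite ltNge; apply/negP => hb; apply: hz'; rewrite ha hb.
    have := h2 hb. lia.
- case: (leP a (frac B)) => hb /=.
  + have ha : a <= frac A. apply: (le_trans hb). move/negbT: hAB. rewrite -ltNge. apply: ltW.
    have := h4 ha. lia.
  + have := h2 hb. case: (leP a (frac A)) => ha /=.
    * have := h4 ha. lia.
    * lia.
- move/negP: hz'; rewrite negbK => /andP[hb ha].
  have := h2 hb. have := h4 ha. lia.
Qed.

End PartA2.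

Section PartB4.
Context {R : realType}.
Context {m : nat}.


Lemma chernoff_alg (q : 'I_m -> R) (s lam : R) :
  (forall i, 0 <= q i <= 1) -> 0 <= lam ->
  \sum_(b : {ffun 'I_m -> bool} | s <= \sum_i ((b i : nat)%:R : R)) \prod_i pb q b i
  <= expR (- (lam * s)) * \prod_i (1 - q i + expR lam * q i).
Proof.
move=> hq hl.
have pb0 b i : 0 <= pb q b i.
  by rewrite /pb; case: (b i); have := hq i; lra.
pose F (i : 'I_m) (v : bool) := expR (lam * (v : nat)%:R) * (if v then q i else 1 - q i).
have -> : \prod_i (1 - q i + expR lam * q i) = \prod_i \sum_(v : bool) F i v.
  apply: eq_bigr => i _; rewrite big_bool /F /= mulr1 mulr0 expR0 mul1r; lra.
rewrite bigA_distr_bigA /= mulr_sumr.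
rewrite [leRHS](bigID (fun b : {ffun 'I_m -> bool} => s <= \sum_i ((b i : nat)%:R : R))) /=.
rewrite -[leLHS]addr0; apply: lerD; last first.
  apply: sumr_ge0 => b _; apply: mulr_ge0; first exact: expR_ge0.
  by apply: prodr_ge0 => i _; rewrite /F; apply: mulr_ge0; [exact: expR_ge0|]; have := pb0 b i.
apply: ler_sum => b hb.
have -> : expR (- (lam * s)) * \prod_i F i (b i) =
   expR (lam * (\sum_i ((b i : nat)%:R : R) - s)) * \prod_i pb q b i.
  rewrite /F big_split /= mulrA -expR_sum -expRD mulrBr mulr_sumr addrC.
  by congr (expR _ * _); apply: eq_bigr.
rewrite -[leLHS]mul1r ler_wpM2r //; first by apply: prodr_ge0 => i _; exact: pb0.
have : 0 <= lam * (\sum_i ((b i : nat)%:R : R) - s) by apply: mulr_ge0 => //; rewrite subr_ge0.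
move=> h; apply: le_trans (expR_ge1Dx _); lra.
Qed.

Lemma prod_exp_bound (q : 'I_m -> R) (z : R) :
  (forall i, 0 <= q i <= 1) -> 1 <= z ->
  \prod_i (1 - q i + z * q i) <= expR ((z - 1) * \sum_i q i).
Proof.
move=> hq hz; rewrite mulr_sumr expR_sum; apply: ler_prod => i _.
have := hq i => hqi; apply/andP; split; first nra.
apply: le_trans (expR_ge1Dx _); lra.
Qed.

End PartB4.

Section PartB2.
Context {R : realType} {d : measure_display} {Omega : measurableType d}.
Variable (Pr : probability Omega R).

Lemma mu_bigU (I : Type) (s : seq I) (P : pred I) (F : I -> set Omega) :
  (forall i, P i -> measurable (F i)) ->
  (Pr (\big[setU/set0]_(i <- s | P i) F i) <= \sum_(i <- s | P i) Pr (F i))%E.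
Proof.
move=> mF; elim: s => [|i s IH]; first by rewrite !big_nil measure0.
rewrite !big_cons; case: ifP => Pi //.
apply: le_trans (measureU2 _ _ _) _; first exact: mF.
  exact: bigsetU_measurable.
exact: leeD.
Qed.

Lemma unif_itv (X : Omega -> R) (u v : R) : uniform01_rv Pr X ->
  0 <= u -> u <= v -> v <= 1 ->
  Pr (X @^-1` [set a | u < a <= v]) = (v - u)%:E.
Proof.
move=> [mX hX] u0 uv v1.
have -> : [set a | u < a <= v] = [set` `]u, v]] by apply/seteqP; split => a /=; rewrite in_itv.
rewrite hX; last exact: measurable_itv.
have -> : [set` `]u, v]] `&` `[0, 1] = [set` `]u, v]].
  apply/seteqP; split => a /=; first by case.
  rewrite /= in_itv /= => /andP[h1 h2]; split; first by rewrite h1 h2.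
  by rewrite (@in_itv _ R) /=; apply/andP; split; lra.
rewrite lebesgue_measure_itv /= lte_fin; case: ifP => [_|].
  by rewrite -EFinD.
move=> /negbT; rewrite -leNgt => vu.
have -> : v = u by apply: le_anti; rewrite vu uv.
by rewrite subrr.
Qed.

Lemma unif_out (X : Omega -> R) : uniform01_rv Pr X ->
  Pr (X @^-1` (~` `[0, 1])) = 0%E.
Proof.
move=> [mX hX]; rewrite hX; last by apply: measurableC; exact: measurable_itv.
by rewrite setICl measure0.
Qed.

End PartB2.

Section PartB3.
Context {R : realType} {d : measure_display} {Omega : measurableType d}.
Variable (Pr : probability Omega R).

Lemma mpre (X : Omega -> R) (B : set R) : uniform01_rv Pr X -> measurable B ->
  measurable (X @^-1` B).
Proof. by move=> [mX _] mB; rewrite -[_ @^-1` _]setTI; exact: mX. Qed.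

Variables (m : nat) (alpha : 'I_m -> Omega -> R) (S : 'I_m -> set R) (q : 'I_m -> R).
Hypothesis unif : forall i, uniform01_rv Pr (alpha i).
Hypothesis indep : mutually_independent Pr alpha.
Hypothesis mS : forall i, measurable (S i).
Hypothesis PS : forall i, Pr (alpha i @^-1` S i) = (q i)%:E.

Definition CS (b : {ffun 'I_m -> bool}) i := if b i then S i else ~` S i.
Definition Cyl (b : {ffun 'I_m -> bool}) : set Omega :=
  \bigcap_(i in [set i | i \in [set: 'I_m]%SET]) (alpha i @^-1` CS b i).

Lemma mCS b i : measurable (CS b i).
Proof. by rewrite /CS; case: (b i); [exact: mS | apply: measurableC; exact: mS]. Qed.

Lemma mCyl b : measurable (Cyl b).
Proof.
apply: fin_bigcap_measurable; first exact: finite_finset.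
by move=> i _; apply: mpre => //; exact: mCS.
Qed.

Lemma cyl_prob b : Pr (Cyl b) = (\prod_i pb q b i)%:E.
Proof.
rewrite /Cyl indep; last exact: mCS.
rewrite -prodEFin; apply: eq_big => [i|i _]; first by rewrite finset.in_setT.
rewrite /CS /pb; case: (b i) => //.
rewrite -preimage_setC probability_setC ?PS //; exact: mpre.
Qed.

Lemma inCyl b w : Cyl b w <-> (forall i, CS b i (alpha i w)).
Proof.
split => [h i|h i _]; last exact: h.
by apply: h; rewrite /= finset.in_setT.
Qed.

End PartB3.

Section PartD.
Context {R : realType} {d : measure_display} {Omega : measurableType d}.

Lemma in_bigU (I : eqType) (s : seq I) (P : pred I) (F : I -> set Omega) (i : I) (w : Omega) :
  i \in s -> P i -> F i w -> (\big[setU/set0]_(j <- s | P j) F j) w.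
Proof.
elim: s => [//|j s IH]; rewrite inE big_cons => /orP[/eqP <-|ins] Pi Fw.
  by rewrite Pi; left.
by case: ifP => _; [right|]; exact: IH.
Qed.

Lemma meas_fin (I : finType) (M : I -> set Omega) (P : {ffun I -> bool} -> bool) :
  (forall i, measurable (M i)) -> measurable [set w | P [ffun i => w \in M i]].
Proof.
move=> mM.
have -> : [set w | P [ffun i => w \in M i]] =
  \big[setU/set0]_(b | P b) \big[setI/setT]_(i <- enum I) (if b i then M i else ~` M i).
  apply/seteqP; split => w /=.
  - move=> Pw; apply: (@in_bigU _ _ _ _ [ffun i => w \in M i]) => //.
      by rewrite mem_index_enum.
    elim: (enum I) => [|i s IH]; first by rewrite big_nil.
    rewrite big_cons; split => //; rewrite ffunE; case: ifP => [/set_mem //|/negbT/negP h].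
    by move=> hw; apply: h; rewrite inE.
  - elim: (index_enum _) => [|b s IH]; first by rewrite big_nil.
    rewrite big_cons; case: ifP => Pb; last exact: IH.
    case; last exact: IH.
    move=> hI; have -> : [ffun i => w \in M i] = b; last by [].
    apply/ffunP => i; rewrite ffunE.
    have : i \in enum I by rewrite mem_enum.
    elim: (enum I) hI => [//|j s' IH'].
    rewrite big_cons inE => -[h hs] /orP[/eqP ej|ins]; last exact: IH'.
    rewrite -ej in h.
    by move: h; case: (b i) => h; [exact: mem_set|apply/negbTE; rewrite notin_setE].
apply: bigsetU_measurable => b _; apply: bigsetI_measurable => i _.
by case: (b i); [exact: mM|apply: measurableC; exact: mM].
Qed.

End PartD.

Section Det.
Variables (R : realType) (Pg : finType) (m : nat) (grp : Pg -> 'I_m) (x : Pg -> nat -> R).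
Hypothesis x0 : forall p t, 0 <= x p t.

Lemma ycum_mono g t : ycum grp x g t <= ycum grp x g t.+1.
Proof.
rewrite /ycum; apply: ler_sum => p _.
by rewrite (big_nat_recr t.+1) //= lerDl x0.
Qed.

Lemma Qtemp_sum (a : 'I_m -> R) t1 t2 :
  ((Qtemp grp x a t1 t2)%:R : R) =
  \sum_g ((\sum_(t1 <= t < t2.+1) (transmits grp x (a g) g t : nat))%:R : R).
Proof.
rewrite -natr_sum /Qtemp; congr (_%:R).
rewrite exchange_big /=; apply: eq_bigr => t _.
rewrite -sum1_card big_mkcond /=; apply: eq_bigr => g _.
by rewrite /in_mem /= /in_set asboolb; case: transmits.
Qed.

Lemma c_bound (a : R) g t1 t2 : (1 <= t1)%N -> (t1 <= t2)%N ->
  ((\sum_(t1 <= t < t2.+1) (transmits grp x a g t : nat))%:R : R) <=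
  (Num.floor (ycum grp x g t2 - a) - Num.floor (ycum grp x g t1.-1 - a))%:~R.
Proof.
move=> h1 h12.
have := @tele_floor R (ycum grp x g) a t1.-1 (t2.+1 - t1) (@ycum_mono g).
have -> : t1.-1.+1 = t1 by rewrite prednK.
have -> : (t1 + (t2.+1 - t1))%N = t2.+1 by lia.
by have -> : (t1.-1 + (t2.+1 - t1))%N = t2 by lia.
Qed.

Lemma D2 t1 t2 : (1 <= t1)%N -> (t1 <= t2)%N ->
  (forall t, (t1 <= t <= t2)%N -> \sum_p x p t <= 1) ->
  \sum_g (ycum grp x g t2 - ycum grp x g t1.-1) <= (t2.+1 - t1)%:R.
Proof.
move=> h1 h12 hx.
have E g : ycum grp x g t2 - ycum grp x g t1.-1 =
    \sum_(p | grp p == g) \sum_(t1 <= t < t2.+1) x p t.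
  rewrite /ycum -sumrB; apply: eq_bigr => p _.
  rewrite prednK // (big_cat_nat (n := t1)) //=; last by lia.
  by rewrite addrAC subrr add0r.
under eq_bigr do rewrite E.
have -> : \sum_g \sum_(p | grp p == g) \sum_(t1 <= t < t2.+1) x p t =
          \sum_p \sum_(t1 <= t < t2.+1) x p t.
  by rewrite [RHS](partition_big grp predT) //=.
rewrite exchange_big /=.
apply: le_trans (ler_sum_nat (G := fun=> 1) _) _.
  by move=> t /andP[a b]; apply: hx; rewrite a /=; lia.
by rewrite sumr_const_nat.
Qed.

Lemma det_main (a : 'I_m -> R) t1 t2 (c : R) :
  (1 <= t1)%N -> (t1 <= t2)%N ->
  (forall t, (t1 <= t <= t2)%N -> \sum_p x p t <= 1) ->
  (forall g, 0 <= a g <= 1) -> 0 < c -> c <= (OF grp x a t1 t2)%:R ->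
  \sum_g qg (ycum grp x g t1.-1) (ycum grp x g t2) + c <=
  \sum_g ((a g \in Sg (ycum grp x g t1.-1) (ycum grp x g t2) : nat)%:R : R).
Proof.
move=> h1 h12 hx ha c0 hc.
set A := fun g => ycum grp x g t1.-1.
set B := fun g => ycum grp x g t2.
have OF1 : (0 < OF grp x a t1 t2)%N.
  by rewrite -(ltr_nat R); apply: lt_le_trans hc.
have hQ : ((Qtemp grp x a t1 t2)%:R : R) = (OF grp x a t1 t2)%:R + (t2.+1 - t1)%:R.
  rewrite -natrD; congr (_%:R); move: OF1; rewrite /OF; lia.
have hcb g : ((\sum_(t1 <= t < t2.+1) (transmits grp x (a g) g t : nat))%:R : R) <=
    (dgi (A g) (B g))%:~R + ((a g \in Sg (A g) (B g) : nat)%:R : R).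
  apply: le_trans (@c_bound (a g) g t1 t2 h1 h12) _.
  have := @grp_X R (A g) (B g) (a g) (ha g).
  move=> h; rewrite -(ler_int R) in h; apply: (le_trans h); by rewrite intrD.
have hsum := @D2 t1 t2 h1 h12 hx.
have hdq : \sum_g ((dgi (A g) (B g))%:~R + qg (A g) (B g)) = \sum_g (B g - A g).
  by apply: eq_bigr => g _; rewrite dq.
have hSC : \sum_g ((\sum_(t1 <= t < t2.+1) (transmits grp x (a g) g t : nat))%:R : R) <= \sum_g ((dgi (A g) (B g))%:~R + ((a g \in Sg (A g) (B g) : nat)%:R : R)) by apply: ler_sum => g _; exact: hcb.
rewrite big_split /= in hSC hdq.
rewrite -Qtemp_sum hQ in hSC.
rewrite big_split /= in hdq. rewrite /A /B /= in hdq hSC. lra.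
Qed.

End Det.

Section F.
Context {R : realType}.

Lemma meas_trans (Pg : finType) (m : nat) (grp : Pg -> 'I_m) (x : Pg -> nat -> R) g t :
  measurable [set a : R | transmits grp x a g t].
Proof.
have -> : [set a : R | transmits grp x a g t] =
  \bigcup_(k : int) [set` `]ycum grp x g t.-1 - k%:~R, ycum grp x g t - k%:~R]].
  apply/seteqP; split => a /=.
  - move=> /asboolP [k hk]; exists k => //=; rewrite in_itv /=.
    by move: hk => /andP[h1 h2]; apply/andP; split; lra.
  - move=> [k _]; rewrite /= in_itv /= => /andP[h1 h2]; apply/asboolP; exists k.
    by apply/andP; split; lra.
apply: countable_bigcupT_measurable; first exact: countableP.
by move=> k; exact: measurable_itv.
Qed.

Lemma ln_lb (w : R) : 0 < w -> 1 - w^-1 <= ln w.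
Proof.
move=> w0; have := expR_ge1Dx (- ln w).
by rewrite expRN lnK ?posrE //; lra.
Qed.

Lemma final_num (eps L lT Q : R) : 0 < eps <= 1 -> 0 <= Q -> Q <= 2 * L ->
  0 <= L -> lT <= eps ^+ 3 * L ->
  ((1 + 2 * eps / 5) ^+ 3 - 1) * Q - 3 * ln (1 + 2 * eps / 5) * (Q + 6 * eps * L)
  <= - (3 * lT).
Proof.
move=> /andP[e0 e1] Q0 QL L0 hT.
set w := 1 + 2 * eps / 5.
have w0 : 0 < w by rewrite /w; lra.
set r := ln w.
set rho := 1 - w^-1.
have hr : rho <= r by exact: ln_lb.
have hrho : rho * w = w - 1 by rewrite /rho mulrBl mul1r mulVf ?gt_eqF.
have coef : 0 <= w ^+ 3 - 1 - 3 * rho.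
  have h : (w ^+ 3 - 1 - 3 * rho) * w = (w - 1) ^+ 2 * (w ^+ 2 + 2 * w + 3).
    transitivity (w ^+ 4 - w - 3 * (rho * w)); first ring.
    rewrite hrho; ring.
  have : 0 <= (w ^+ 3 - 1 - 3 * rho) * w.
    by rewrite h; apply: mulr_ge0; [exact: sqr_ge0| rewrite /w; nra].
  by rewrite pmulr_lge0.
have key : (w ^+ 3 - 1 - 3 * rho) * 2 - 18 * rho * eps <= - 3 * eps ^+ 3.
  have h : ((w ^+ 3 - 1 - 3 * rho) * 2 - 18 * rho * eps) * w =
         eps ^+ 2 * (- (528 / 100) + (3512 / 1000) * eps + (12512 / 10000) * eps ^+ 2)
         - 3 * eps ^+ 3 * w.
    transitivity (2 * w ^+ 4 - 2 * w - (6 + 18 * eps) * (rho * w)); first ring.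
    by rewrite hrho /w; field.
  have hp : - (528 / 100) + (3512 / 1000) * eps + (12512 / 10000) * eps ^+ 2 <= 0 by nra.
  have : ((w ^+ 3 - 1 - 3 * rho) * 2 - 18 * rho * eps) * w <= - 3 * eps ^+ 3 * w.
    rewrite h; have he : 0 <= eps ^+ 2 by exact: sqr_ge0.
    have := mulr_ge0_le0 he hp; lra.
  by rewrite ler_pM2r.
have s1 : 3 * rho * (Q + 6 * eps * L) <= 3 * r * (Q + 6 * eps * L).
  by apply: ler_wpM2r; [nra | lra].
have s2 : (w ^+ 3 - 1 - 3 * rho) * Q <= (w ^+ 3 - 1 - 3 * rho) * (2 * L).
  exact: ler_wpM2l.
have s3 := ler_wpM2l L0 key.
have s4 : L * (- 3 * eps ^+ 3) <= - (3 * lT) by nra.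
nra.
Qed.

End F.

Theorem lemma2p13 (R : realType) (Pg : finType) (reqs : seq (nat * Pg))
  (Lstar : nat) (eps : R)
  (m : nat) (grp : Pg -> 'I_m) (x : Pg -> nat -> R)
  (d : measure_display) (Omega : measurableType d) (Pr : probability Omega R)
  (alpha : 'I_m -> Omega -> R) (t1 t2 : nat) :
  is_opt_max_flow reqs Lstar ->
  consecutive_gap_le reqs Lstar ->
  lp_feasible reqs Lstar x ->
  (m <= 2 * Lstar)%N ->
  (forall g : 'I_m, exists p, grp p = g) ->
  (forall p q, p != q -> grp p = grp q ->
     forall t, ~~ (in_window reqs Lstar p t && in_window reqs Lstar q t)) ->
  (forall g, uniform01_rv Pr (alpha g)) ->
  mutually_independent Pr alpha ->
  0 < eps <= 1 ->
  (eps ^+ 3)^-1 * ln (horizon reqs)%:R <= Lstar%:R ->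
  (1 <= t1)%N -> (t1 <= t2)%N -> (t2 <= horizon reqs)%N ->
  (Pr [set w | (6 * eps * Lstar%:R <=
               (OF grp x (fun g => alpha g w) t1 t2)%:R)%R]
     <= (((horizon reqs)%:R ^+ 3)^-1)%:E)%E.
Proof.
move=> _ _ [_ _ hx1 _ hx0] hm _ _ hunif hind /andP[e0 e1] hL h1 h12 h2T.
set T := horizon reqs.
set E := [set w | _].
pose M (i : 'I_m * 'I_t2.+1) : set Omega :=
  alpha i.1 @^-1` [set a | transmits grp x a i.1 i.2].
pose P (f : {ffun 'I_m * 'I_t2.+1 -> bool}) : bool :=
  (6 * eps * Lstar%:R <= ((\sum_(t1 <= t < t2.+1)
       #|[set g : 'I_m | f (g, inord t)]| - (t2 - t1 + 1))%N)%:R).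
have eqOF w : OF grp x (alpha^~ w) t1 t2 = (\sum_(t1 <= t < t2.+1)
       #|[set g : 'I_m | [ffun i => w \in M i] (g, inord t)]| - (t2 - t1 + 1))%N.
  rewrite /OF /Qtemp; congr (_ - _)%N; apply: eq_big_nat => t /andP[_ ht].
  apply: eq_card => g; rewrite /in_mem /= /in_set /= ffunE /M /= inordK //.
  by rewrite !asboolb.

have mE : measurable E.
  have -> : E = [set w | P [ffun i => w \in M i]].
    by apply/seteqP; split => w /=; rewrite /P -eqOF.
  apply: meas_fin => i; apply: mpre => //; exact: meas_trans.
have T1 : (1 <= T)%N by rewrite /T; lia.
have [hT1|hT1] := leqP T 1.
  have -> : T = 1%N by lia.
  by rewrite expr1n invr1; exact: probability_le1.
have lnT0 : 0 < ln (T%:R : R) by apply: ln_gt0; rewrite ltr1n.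
have hLT : ln (T%:R : R) <= eps ^+ 3 * Lstar%:R.
  have e3 : 0 < eps ^+ 3 by exact: exprn_gt0.
  by have := ler_wpM2l (ltW e3) hL; rewrite mulrA mulfV ?gt_eqF // mul1r.
have L0 : (0 < Lstar)%N.
  rewrite -(ltr_nat R); apply: lt_le_trans hL; apply: mulr_gt0 => //.
  by rewrite invr_gt0 exprn_gt0.
set A := fun g => ycum grp x g t1.-1.
set B := fun g => ycum grp x g t2.
pose S g := Sg (A g) (B g).
pose q g := qg (A g) (B g).
have hq g : 0 <= q g <= 1.
  rewrite /q /qg; have := frac_ge0 (A g); have := frac_lt1 (A g).
  have := frac_ge0 (B g); have := frac_lt1 (B g).
  case: ifP => h; lra.
have itvE (u v : R) : [set a | u < a <= v] = [set` `]u, v]].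
  by apply/seteqP; split => a /=; rewrite in_itv.
have cE (u v : R) : [set a | ~~ (u < a <= v)] = ~` [set a | u < a <= v].
  by apply/seteqP; split => a /= h; [move/negP: h | apply/negP].
have mS g : measurable (S g).
  rewrite /S /Sg; case: ifP => h; rewrite ?cE ?itvE; last apply: measurableC;
  exact: measurable_itv.
have PS g : Pr (alpha g @^-1` S g) = (q g)%:E.
  rewrite /S /q /Sg /qg; have := frac_ge0 (A g); have := frac_lt1 (A g).
  have := frac_ge0 (B g); have := frac_lt1 (B g).
  case: ifP => h hB1 hB0 hA1 hA0.
    by apply: unif_itv => //; lra.
  rewrite cE -preimage_setC probability_setC; last first.
    by apply: mpre => //; rewrite itvE; exact: measurable_itv.
  by rewrite unif_itv //; try lra.
set c := 6 * eps * Lstar%:R.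
have c0 : 0 < c by rewrite /c; apply: mulr_gt0; [lra|rewrite ltr0n].
set s := \sum_g q g + c.
pose N0 := \big[setU/set0]_(g : 'I_m) (alpha g @^-1` (~` `[0%R, 1%R])).
pose U := \big[setU/set0]_(b : {ffun 'I_m -> bool} | s <= \sum_i ((b i : nat)%:R : R))
   Cyl m alpha S b.
have incl : E `<=` N0 `|` U.
  move=> w Ew.
  have [hw|hw] := pselect (forall g, 0 <= alpha g w <= 1).
  - right.
    have hdet := @det_main R Pg m grp x hx0 (alpha^~ w) t1 t2 c h1 h12
       (fun t ht => hx1 t ltac:(move: ht h2T; rewrite /T; lia)) hw c0 Ew.
    apply: (@in_bigU _ _ _ _ _ _ [ffun i => alpha i w \in S i]).
    + exact: mem_index_enum.
    + rewrite /s; apply: le_trans hdet _; apply: ler_sum => i _; rewrite ffunE.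
      by [].
    + apply/inCyl => i; rewrite /CS ffunE; case: ifP => hh.
        exact: set_mem hh.
      by move/negbT: hh; rewrite notin_setE.
  - left; move/existsNP: hw => [g hg].
    apply: (@in_bigU _ _ _ _ _ _ g) => //; first exact: mem_index_enum.
have mN0 : measurable N0.
  apply: bigsetU_measurable => g _; apply: mpre => //.
  by apply: measurableC; exact: measurable_itv.
have mU : measurable U.
  by apply: bigsetU_measurable => b _; exact: (mCyl Pr m alpha S hunif mS b).
have step1 : (Pr E <= Pr (N0 `|` U))%E.
  by apply: le_measure => //; rewrite inE //; apply: measurableU.
have step2 : (Pr (N0 `|` U) <= Pr N0 + Pr U)%E by exact: measureU2.
have PN0 : Pr N0 = 0%E.
  apply/eqP; rewrite -measure_le0; apply: le_trans; first apply: mu_bigU.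
    by move=> g _; apply: mpre => //; apply: measurableC; exact: measurable_itv.
  by rewrite big1 // => g _; rewrite unif_out.
have PU : (Pr U <= (\sum_(b : {ffun 'I_m -> bool} | s <= \sum_i ((b i : nat)%:R : R))
                     \prod_i pb q b i)%:E)%E.
  apply: le_trans; first apply: mu_bigU.
    by move=> b _; exact: (mCyl Pr m alpha S hunif mS b).
  rewrite -sumEFin; apply: lee_sum => b _.
  by rewrite (cyl_prob Pr m alpha S q hunif hind mS PS).
apply: le_trans step1 _; apply: le_trans step2 _; rewrite PN0 add0e.
apply: le_trans PU _; rewrite lee_fin.
set w := 1 + 2 * eps / 5.
have w1 : 1 <= w by rewrite /w; lra.
set lam := 3 * ln w.
have lam0 : 0 <= lam by rewrite /lam; apply: mulr_ge0 => //; exact: ln_ge0.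
have hz : expR lam = w ^+ 3.
  by rewrite /lam expRM_natl lnK // posrE; lra.
apply: le_trans (chernoff_alg q s lam hq lam0) _.
apply: le_trans (ler_wpM2l (expR_ge0 _) (prod_exp_bound q (expR lam) hq _)) _.
  by rewrite hz; rewrite -(expr1n _ 3); apply: lerXn2r => //; rewrite ?nnegrE; lra.
rewrite -expRD.
have hQ0 : 0 <= \sum_g q g by apply: sumr_ge0 => g _; have := hq g; lra.
have hQ2 : \sum_g q g <= 2 * Lstar%:R.
  apply: le_trans (_ : \sum_(g : 'I_m) (1 : R) <= _).
    by apply: ler_sum => g _; have := hq g; lra.
  rewrite sumr_const card_ord -natrM ler_nat; lia.
have fin := @final_num R eps (Lstar%:R) (ln (T%:R : R)) (\sum_g q g)
  ltac:(apply/andP; split; lra) hQ0 hQ2 ltac:(by rewrite ler0n) hLT.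
have -> : (T%:R ^- 3 : R) = expR (- (3 * ln (T%:R : R))).
  rewrite expRN expRM_natl lnK // posrE ltr0n; lia.
rewrite ler_expR hz /s /c /lam; move: fin; rewrite -/w; lra.
Qed.
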